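(* Let $\mathrm{cleaf}_3:\mathbb{R}\to\mathbb{R}$ be the leaf function of basis $3$ and write $c=\mathrm{cleaf}_3(l)$. For every real $l$, $$\mathrm{cleaf}_3(2l)=\frac{2c^2+2c^4-1}{\sqrt{1+8c^2+8c^6-8c^8}}.$$
   Context: For a natural number $n$, the leaf function $\mathrm{cleaf}_n:\mathbb{R}\to\mathbb{R}$ is the solution of $\frac{\mathrm{d}^2r}{\mathrm{d}l^2}=-n\,r^{2n-1}$ with $r(0)=1$, $r'(0)=0$. *)

(* Defs.v *)
From Stdlib Require Import Reals.
From Coquelicot Require Import Coquelicot.
Open Scope R_scope.

(* r is the leaf function cleaf_n: a solution on all of R of
   r'' = -n r^(2n-1), r(0) = 1, r'(0) = 0.  (Such a solution exists and is
   unique, so quantifying over all such r characterizes cleaf_n.) *)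
Definition is_cleaf (n : nat) (r : R -> R) : Prop :=
  exists r' : R -> R,
    (forall x, is_derive r x (r' x)) /\
    (forall x, is_derive r' x (- INR n * r x ^ (2 * n - 1))) /\
    r 0 = 1 /\ r' 0 = 0.

(* Main.v *)
Require Import Defs.
From Stdlib Require Import Reals.
From Coquelicot Require Import Coquelicot.
From Stdlib Require Import Lra Psatz.
Open Scope R_scope.

Definition Np c := 2*c^2+2*c^4-1.
Definition Dp c := 1+8*c^2+8*c^6-8*c^8.
Definition Pp c := 12*c*(1+2*c^2+6*c^4-4*c^6+4*c^8).
Definition Ppd c := 12+72*c^2+360*c^4-336*c^6+432*c^8.
Definition Ddp c := 16*c+48*c^5-64*c^7.
Definition Qp c := Ppd c * Dp c - 3/2 * Pp c * Ddp c.
Definition phi c := Np c / sqrt (Dp c).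
Definition psi c := Pp c / (Dp c * sqrt (Dp c)).
Definition psid c := Qp c / (Dp c ^ 2 * sqrt (Dp c)).

Ltac fixD c := repeat match goal with |- context [sqrt ?a] => lazymatch a with Dp _ => fail | _ => replace a with (Dp c) by (unfold Dp; ring) end end.

Ltac qfin q Hq Hq2 c :=
 assert (Hd0: Dp c <> 0) by (rewrite <- Hq2; nra);
 field_simplify_eq; [|try lra..];
 repeat match goal with
 | |- context [q ^ ?k] => match k with 0%nat => fail | 1%nat => fail | _ =>
      let k' := eval compute in (k-2)%nat in
      replace (q ^ k) with (q ^ k' * Dp c) by (rewrite <- Hq2; simpl; ring) end end;
 unfold Dp; ring.

Lemma phi_der c : 0 < Dp c -> is_derive phi c (psi c).
Proof. intros H. unfold phi, psi, Np, Pp.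
 apply is_derive_ext with (fun c => (2*c^2+2*c^4-1) / sqrt (1+8*c^2+8*c^6-8*c^8)). reflexivity.
 auto_derive; fixD c.
 { split; [|split; [apply Rgt_not_eq, sqrt_lt_R0; exact H|exact I]]. match goal with |- 0 < ?a => replace a with (Dp c) by (unfold Dp; ring) end; exact H. }
 assert (Hq: 0 < sqrt (Dp c)) by (apply sqrt_lt_R0; lra).
 assert (Hq2: sqrt (Dp c) * sqrt (Dp c) = Dp c) by (apply sqrt_sqrt; lra).
 set (q := sqrt (Dp c)) in *.
 qfin q Hq Hq2 c.
Qed.

Lemma psi_der c : 0 < Dp c -> is_derive psi c (psid c).
Proof. intros H. unfold psi, psid, Qp, Ppd, Ddp, Pp.
 apply is_derive_ext with (fun c => 12*c*(1+2*c^2+6*c^4-4*c^6+4*c^8) / ((1+8*c^2+8*c^6-8*c^8) * sqrt (1+8*c^2+8*c^6-8*c^8))). reflexivity.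
 auto_derive; fixD c.
 { repeat split.
   - match goal with |- 0 < ?a => replace a with (Dp c) by (unfold Dp; ring) end; exact H.
   - match goal with |- ?a <> 0 => replace a with (Dp c * sqrt (Dp c)) by (unfold Dp; ring) end.
     apply Rmult_integral_contrapositive; split; [lra|apply Rgt_not_eq, sqrt_lt_R0; exact H]. }
 assert (Hq: 0 < sqrt (Dp c)) by (apply sqrt_lt_R0; lra).
 assert (Hq2: sqrt (Dp c) * sqrt (Dp c) = Dp c) by (apply sqrt_sqrt; lra).
 set (q := sqrt (Dp c)) in *.
 qfin q Hq Hq2 c.
Qed.

Lemma dmul (f g : R -> R) (x df dg : R) : is_derive f x df -> is_derive g x dg ->
  is_derive (fun t => f t * g t) x (df * g x + f x * dg).
Proof. intros. apply (is_derive_mult f g x df dg); auto. intros; apply Rmult_comm. Qed.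
Lemma dplus (f g : R -> R) (x df dg : R) : is_derive f x df -> is_derive g x dg ->
  is_derive (fun t => f t + g t) x (df + dg).
Proof. intros. apply (is_derive_plus f g x df dg); auto. Qed.
Lemma dminus (f g : R -> R) (x df dg : R) : is_derive f x df -> is_derive g x dg ->
  is_derive (fun t => f t - g t) x (df - dg).
Proof. intros. apply (is_derive_minus f g x df dg); auto. Qed.
Lemma dcomp (f g : R -> R) (x df dg : R) : is_derive f (g x) df -> is_derive g x dg ->
  is_derive (fun t => f (g t)) x (dg * df).
Proof. intros. apply (is_derive_comp f g x df dg); auto. Qed.
Lemma deq (f : R -> R) (x l l' : R) : is_derive f x l -> l = l' -> is_derive f x l'.
Proof. intros H ->; exact H. Qed.
Lemma dlin (x a : R) : is_derive (fun t => a * t) x a.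
Proof. eapply deq. apply is_derive_scal, is_derive_id. simpl. unfold one; simpl. ring. Qed.

Lemma nonincr (f f' : R -> R) : (forall x, is_derive f x (f' x)) -> (forall x, f' x <= 0) ->
  forall a b, a <= b -> f b <= f a.
Proof. intros Hd Hn a b Hab. destruct (Req_dec a b) as [->|Hne]; [lra|].
 destruct (MVT_cor2 f f' a b) as [c [Hc _]]; [lra| |].
 intros c _. apply is_derive_Reals, Hd.
 specialize (Hn c). nra. Qed.

Lemma lip5 x y : -1 <= x <= 1 -> -1 <= y <= 1 -> Rabs (x^5 - y^5) <= 5 * Rabs (x - y).
Proof. intros Hx Hy.
 replace (x^5 - y^5) with ((x-y) * (x^4+x^3*y+x^2*y^2+x*y^3+y^4)) by ring.
 rewrite Rabs_mult. rewrite Rmult_comm. apply Rmult_le_compat_r; [apply Rabs_pos|].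
 assert (0 <= x^2 <= 1) by nra. assert (0 <= y^2 <= 1) by nra.
 assert (-1 <= x*y <= 1) by nra.
 assert (x^3*y <= 1) by (replace (x^3*y) with (x^2*(x*y)) by ring; nra).
 assert (x*y^3 <= 1) by (replace (x*y^3) with (y^2*(x*y)) by ring; nra).
 assert (x^3*y >= -1) by (replace (x^3*y) with (x^2*(x*y)) by ring; nra).
 assert (x*y^3 >= -1) by (replace (x*y^3) with (y^2*(x*y)) by ring; nra).
 assert (x^4 <= 1) by nra. assert (y^4 <= 1) by nra. assert ((x*y)^2 <= 1) by nra.
 assert (0 <= x^4) by nra. assert (0 <= y^4) by nra. assert (0 <= (x*y)^2) by nra.
 apply Rabs_le. split; nra.
Qed.

Lemma Dp_ge1 c : -1 <= c <= 1 -> 1 <= Dp c.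
Proof. intros Hc. unfold Dp. assert (0 <= c^2 <= 1) by nra. assert (0 <= c^6) by (replace (c^6) with ((c^3)^2) by ring; nra).
 replace (8*c^6 - 8*c^8) with (8*c^6*(1-c^2)) by ring. nra. Qed.

Lemma phi_bound c : -1 <= c <= 1 -> -1 <= phi c <= 1.
Proof. intros Hc. pose proof (Dp_ge1 c Hc).
 assert (Hq: 0 < sqrt (Dp c)) by (apply sqrt_lt_R0; lra).
 assert (Hq2: sqrt (Dp c) * sqrt (Dp c) = Dp c) by (apply sqrt_sqrt; lra).
 assert (HN: Np c ^2 <= Dp c).
 { unfold Np, Dp. assert (0 <= c^2 <= 1) by nra. assert (c^2*c^2 <= 1) by nra. assert (c^6 <= 1) by (replace (c^6) with (c^2*c^2*c^2) by ring; nra).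
   replace (1 + 8 * c ^ 2 + 8 * c ^ 6 - 8 * c ^ 8) with ((2 * c ^ 2 + 2 * c ^ 4 - 1)^2 + 12*c^2*(1-c^6)) by ring. nra. }
 unfold phi. set (q := sqrt (Dp c)) in *.
 assert (Rabs (Np c) <= q). { destruct (Rle_dec (Rabs (Np c)) q) as [?|Hn]; [assumption|]. exfalso. pose proof (pow2_abs (Np c)). nra. }
 apply Rabs_le_between' in H0. assert (-q <= Np c <= q) by (unfold Np; lra).
 split; [apply (Rmult_le_reg_r q); [lra|]; unfold Rdiv; rewrite Rmult_assoc, Rinv_l by lra; lra|].
 apply (Rmult_le_reg_r q); [lra|]; unfold Rdiv; rewrite Rmult_assoc, Rinv_l by lra; lra.
Qed.

Lemma key c s : -1 <= c <= 1 -> s^2 = 1 - c^6 ->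
  -3 * c^5 * psi c + s * (psid c * s) = -12 * phi c ^ 5.
Proof. intros Hc Hs. pose proof (Dp_ge1 c Hc).
 replace (s * (psid c * s)) with (s^2 * psid c) by ring. rewrite Hs.
 unfold psi, psid, phi, Qp, Ppd, Ddp, Pp, Np.
 assert (Hq: 0 < sqrt (Dp c)) by (apply sqrt_lt_R0; lra).
 assert (Hq2: sqrt (Dp c) * sqrt (Dp c) = Dp c) by (apply sqrt_sqrt; lra).
 set (q := sqrt (Dp c)) in *.
 qfin q Hq Hq2 c.
Qed.

Lemma const0 (f : R -> R) : (forall x, is_derive f x 0) -> forall x, f x = f 0.
Proof. intros Hd x.
 assert (A: forall a b, a <= b -> f b <= f a) by (apply (nonincr f (fun _ => 0)); auto; intros; lra).
 assert (B: forall a b, a <= b -> - f b <= - f a).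
 { apply (nonincr (fun t => - f t) (fun _ => 0)); [|intros; lra].
   intros y. eapply deq. apply (is_derive_opp f y 0), Hd. simpl. unfold opp; simpl. ring. }
 destruct (Rle_dec 0 x); [specialize (A 0 x); specialize (B 0 x)|specialize (A x 0); specialize (B x 0)]; lra.
Qed.

Theorem mainTheorem7 (cleaf3 : R -> R) (H : is_cleaf 3 cleaf3) (l : R) :
  cleaf3 (2 * l) =
  (2 * cleaf3 l ^ 2 + 2 * cleaf3 l ^ 4 - 1) /
    sqrt (1 + 8 * cleaf3 l ^ 2 + 8 * cleaf3 l ^ 6 - 8 * cleaf3 l ^ 8).
Proof.
 destruct H as [r' [Hr [Hr' [H0 H0']]]]. set (r := cleaf3) in *.
 assert (Hr2: forall x, is_derive r' x (-3 * r x ^ 5)).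
 { intros x. eapply deq. apply Hr'. simpl. ring. }
 clear Hr'.
 assert (HE: forall x, r' x ^ 2 + r x ^ 6 = 1).
 { intros x. rewrite (const0 (fun t => r' t ^ 2 + r t ^ 6)). simpl. rewrite H0, H0'. ring.
   intros y. eapply deq. apply dplus; apply is_derive_pow; [apply Hr2|apply Hr]. simpl. ring. }
 assert (Hb: forall x, -1 <= r x <= 1).
 { intros x. specialize (HE x). assert (0 <= r' x ^2) by nra.
   assert (r x ^ 2 <= 1).
   { destruct (Rle_dec (r x ^ 2) 1) as [?|Hn]; [assumption|]. exfalso.
     assert (r x^2 * r x^2 > 1) by nra.
     assert (r x^6 = r x^2 * r x^2 * r x^2) by ring. nra. }
   nra. }
 set (g := fun t => r (2 * t)). set (g' := fun t => 2 * r' (2 * t)).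
 set (F := fun t => phi (r t)). set (F' := fun t => r' t * psi (r t)).
 assert (Dg: forall t, is_derive g t (g' t)).
 { intros t. eapply deq. apply (dcomp r (fun t => 2 * t)). apply Hr. apply dlin. unfold g'. ring. }
 assert (Dg': forall t, is_derive g' t (-12 * g t ^ 5)).
 { intros t. eapply deq. apply (is_derive_scal (fun t => r' (2 * t))).
   apply (dcomp r' (fun t => 2 * t)). apply Hr2. apply dlin. unfold g. ring. }
 assert (DF: forall t, is_derive F t (F' t)).
 { intros t. eapply deq. apply (dcomp phi r). apply phi_der. pose proof (Dp_ge1 _ (Hb t)); lra.
   apply Hr. unfold F'. ring. }
 assert (DF': forall t, is_derive F' t (-12 * F t ^ 5)).
 { intros t. eapply deq. apply dmul. apply Hr2. apply (dcomp psi r). apply psi_der.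
   pose proof (Dp_ge1 _ (Hb t)); lra. apply Hr.
   unfold F. rewrite <- (key (r t) (r' t)). ring. apply Hb. specialize (HE t). lra. }
 set (d := fun t => (g t - F t) ^ 2 + (g' t - F' t) ^ 2).
 set (d' := fun t => 2 * (g t - F t) * (g' t - F' t) + 2 * (g' t - F' t) * (-12 * g t ^ 5 - -12 * F t ^ 5)).
 assert (Dd: forall t, is_derive d t (d' t)).
 { intros t. eapply deq. apply dplus; apply is_derive_pow; apply dminus; auto.
   unfold d'. simpl. ring. }
 assert (Bd: forall t, Rabs (d' t) <= 61 * d t).
 { intros t. unfold d', d.
   pose proof (lip5 (g t) (F t) (Hb _) (phi_bound _ (Hb t))).
   set (a := g t - F t) in *. set (b := g' t - F' t).
   replace (2 * a * b + 2 * b * (-12 * g t ^ 5 - -12 * F t ^ 5)) with (2 * a * b - 24 * (b * (g t ^ 5 - F t ^ 5))) by ring.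
   eapply Rle_trans. apply Rabs_triang. rewrite Rabs_Ropp.
   rewrite !Rabs_mult. rewrite (Rabs_pos_eq 2) by lra. rewrite (Rabs_pos_eq 24) by lra.
   assert (0 <= Rabs b) by apply Rabs_pos. assert (0 <= Rabs a) by apply Rabs_pos.
   assert (Rabs b * Rabs (g t ^ 5 - F t ^ 5) <= Rabs b * (5 * Rabs a)) by (apply Rmult_le_compat_l; auto).
   assert (Rabs a * Rabs a = a^2) by (rewrite <- Rabs_mult; rewrite Rabs_pos_eq; [ring|nra]).
   assert (Rabs b * Rabs b = b^2) by (rewrite <- Rabs_mult; rewrite Rabs_pos_eq; [ring|nra]).
   assert (0 <= (Rabs a - Rabs b)^2) by apply pow2_ge_0. nra. }
 assert (Hd0: d 0 = 0).
 { unfold d, g, g', F, F'. rewrite Rmult_0_r, H0, H0'.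
   unfold phi, Np, Dp. replace (1 + 8 * 1 ^ 2 + 8 * 1 ^ 6 - 8 * 1 ^ 8) with (3 * 3) by ring.
   rewrite sqrt_square by lra. field. }
 assert (Hdl: d l = 0).
 { assert (0 <= d l) by (unfold d; cbv beta; apply Rplus_le_le_0_compat; apply pow2_ge_0).
   destruct (Rle_dec 0 l).
   - pose proof (nonincr (fun t => exp (-61 * t) * d t) (fun t => -61 * exp (-61 * t) * d t + exp (-61 * t) * d' t)) as N.
     assert (N1 : exp (-61 * l) * d l <= exp (-61 * 0) * d 0).
     { apply N; auto. intros x. eapply deq. apply dmul; auto. apply (dcomp exp (fun t => -61 * t)). apply is_derive_exp. apply dlin. cbv beta. ring.
       intros x. pose proof (Bd x) as Bx. apply Rabs_le_between in Bx. pose proof (exp_pos (-61 * x)). nra. }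
     rewrite Hd0 in N1. pose proof (exp_pos (-61 * l)). nra.
   - pose proof (nonincr (fun t => - (exp (61 * t) * d t)) (fun t => - (61 * exp (61 * t) * d t + exp (61 * t) * d' t))) as N.
     assert (N1 : - (exp (61 * 0) * d 0) <= - (exp (61 * l) * d l)).
     { apply N; [|  |lra]. intros x. eapply deq. apply (is_derive_opp (fun t => exp (61 * t) * d t)).
       apply dmul; auto. apply (dcomp exp (fun t => 61 * t)). apply is_derive_exp. apply dlin. simpl. unfold opp; simpl. ring.
       intros x. pose proof (Bd x) as Bx. apply Rabs_le_between in Bx. pose proof (exp_pos (61 * x)). nra. }
     rewrite Hd0 in N1. pose proof (exp_pos (61 * l)). nra. }
 assert (E: g l = F l).
 { unfold d in Hdl; cbv beta in Hdl. pose proof (pow2_ge_0 (g' l - F' l)). pose proof (pow2_ge_0 (g l - F l)).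
   assert (Z: (g l - F l)^2 = 0) by lra. apply Rminus_diag_uniq. simpl in Z. nra. }
 unfold g, F, phi, Np, Dp in E. exact E.
Qed.
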